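(* Let $q\ge2$, let $\mathbf{u}$ be a probability distribution on $[1:q]$, and let $a\ne b\in[1:q]$. Then for all sufficiently large $n$: $D_{ab}(M_{n,\mathbf{u}})=2$ if $a\notin\mathrm{supp}(\mathbf{u})$ or $b\notin\mathrm{supp}(\mathbf{u})$, and $D_{ab}(M_{n,\mathbf{u}})\le \frac{C_1(\log n)^{(|\mathrm{supp}(\mathbf{u})|-2)/2}}{\sqrt n}$ if $a,b\in\mathrm{supp}(\mathbf{u})$, where $C_1$ is a constant independent of $n$. In particular, if $\mathbf{u}$ has strictly positive entries, then $D_{ab}(M_{n,\mathbf{u}})\le \frac{C_1(\log n)^{(q-2)/2}}{\sqrt n}$ for every $a\ne b$.
   Context: $\mathcal{N}_{q,n}=\{\mathbf{t}\in\mathbb{Z}_{\ge0}^q:\sum_it_i=n\}$. The multinomial distribution is $M_{n,\mathbf{u}}(\mathbf{t})=\frac{n!}{t_1!\cdots t_q!}\prod_iu_i^{t_i}$ for $\mathbf{t}\in\mathcal{N}_{q,n}$ (with $0^0=1$). $\mathrm{supp}(\mathbf{u})=\{i:u_i>0\}$. $\mathbf{e}_c$ is the $c$-th standard unit vector in $\mathbb{Z}^q$. For a distribution $Q$ on $\mathcal{N}_{q,n}$ and $a\ne b$, $D_{ab}(Q)=\sum_{\mathbf{t}\in\mathcal{N}_{q,n+1}}|Q(\mathbf{t}-\mathbf{e}_b)-Q(\mathbf{t}-\mathbf{e}_a)|$, where $Q(\mathbf{s})=0$ whenever $\mathbf{s}\notin\mathcal{N}_{q,n}$ (some coordinate outside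 $[0:n]$). Logarithms base 2. *)

(* Defs.v *)
From HB Require Import structures.
From mathcomp Require Import all_boot all_order all_algebra.
From mathcomp Require Import all_classical all_reals all_analysis.
Set Implicit Arguments. Unset Strict Implicit. Unset Printing Implicit Defensive.
Import Order.TTheory GRing.Theory Num.Theory.
Local Open Scope ring_scope.

Section Defs.
Variable R : realType.

(* Multinomial distribution M_{n,u}, as a function on all t : 'I_q -> nat;
   it is 0 outside N_{q,n} (i.e. when sum t <> n). 0^0 = 1 via ^+. *)
Definition multinom (q n : nat) (u : 'I_q -> R) (t : 'I_q -> nat) : R :=
  if (\sum_(i < q) t i == n)%N then
    (n`!)%:R / (\prod_(i < q) (t i)`!)%:R * \prod_(i < q) u i ^+ t i
  else 0.

(* Q(t - e_c), with value 0 when t - e_c has a negative coordinate. *)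
Definition shiftQ (q : nat) (Q : ('I_q -> nat) -> R) (t : 'I_q -> nat) (c : 'I_q) : R :=
  if (0 < t c)%N then Q (fun i => (t i - (i == c))%N) else 0.

(* D_ab(Q) = sum over t in N_{q,n+1} of |Q(t-e_b) - Q(t-e_a)|.
   N_{q,n+1} is enumerated as functions 'I_q -> 'I_(n+2) with coordinate sum n+1. *)
Definition Dab (q n : nat) (Q : ('I_q -> nat) -> R) (a b : 'I_q) : R :=
  \sum_(t : {ffun 'I_q -> 'I_n.+2} | (\sum_(i < q) (t i : nat) == n.+1)%N)
     `| shiftQ Q (fun i => (t i : nat)) b - shiftQ Q (fun i => (t i : nat)) a |.

Definition log2 (x : R) : R := ln x / ln 2.

Definition supp_size (q : nat) (u : 'I_q -> R) : nat := #|[pred i | 0 < u i]|.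

End Defs.

(* Main.v *)
Require Import Defs.
From HB Require Import structures.
From mathcomp Require Import all_boot all_order all_algebra.
From mathcomp Require Import all_classical all_reals all_analysis.
From mathcomp Require Import zify ring lra.
Import Order.TTheory GRing.Theory Num.Theory.
Set Implicit Arguments. Unset Strict Implicit. Unset Printing Implicit Defensive.
Local Open Scope ring_scope.

Definition Sm {R : realType} (q m : nat) (F : ('I_q -> nat) -> R) : R :=
  \sum_(t : {ffun 'I_q -> 'I_m.+1} | (\sum_(i < q) (t i : nat) == m)%N)
     F (fun i => (t i : nat)).

Lemma two_le_sum q (f : 'I_q -> nat) (i c : 'I_q) : i != c ->
  (f i + f c <= \sum_(j < q) f j)%N.
Proof.
move=> ic; rewrite (bigD1 i) //= (bigD1 c) /=; last by rewrite eq_sym.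
by rewrite addnA leq_addr.
Qed.

Lemma one_le_sum q (f : 'I_q -> nat) (c : 'I_q) : (f c <= \sum_(j < q) f j)%N.
Proof. by rewrite (bigD1 c) //= leq_addr. Qed.

Lemma Sm_shift (R : realType) q k (c : 'I_q) (G : ('I_q -> nat) -> R) :
  Sm k.+1 (fun t => if (0 < t c)%N then G (fun i => (t i - (i == c))%N) else 0)
  = Sm k G.
Proof.
rewrite /Sm -big_mkcondr /=.
rewrite (reindex_onto (fun s : {ffun 'I_q -> 'I_k.+1} =>
            [ffun i => inord (s i + (i == c)) : 'I_k.+2])
          (fun t : {ffun 'I_q -> 'I_k.+2} =>
            [ffun i => inord (t i - (i == c)) : 'I_k.+1])) /=.
  apply: eq_big => s.
    have hv : forall i, ((inord (s i + (i == c)) : 'I_k.+2) : nat)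
                 = (s i + (i == c))%N.
      by move=> i; rewrite inordK // ltnS; have := ltn_ord (s i); case: (i == c) => /=; lia.
    rewrite ffunE hv eqxx addn1 ltn0Sn andbT.
    under eq_bigr do rewrite ffunE hv.
    rewrite big_split /= -big_mkcond /= big_pred1_eq addn1 eqSS.
    case: eqP => //= _; apply/eqP/ffunP => i; rewrite !ffunE; apply: val_inj => /=.
    by rewrite hv addnK inordK.
  move=> _; congr G; apply: funext => i /=.
  by rewrite ffunE inordK ?addnK // ltnS; have := ltn_ord (s i); case: (i == c) => /=; lia.
move=> t /andP [/eqP hs hc]; apply/ffunP => i; rewrite !ffunE; apply: val_inj => /=.
have hle : (t i - (i == c) < k.+1)%N.
  case: (eqVneq i c) => [->|ic] /=.
    by have := ltn_ord (t c); lia.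
  by rewrite subn0; have := two_le_sum (fun j => (t j : nat)) ic; rewrite /= hs; lia.
rewrite (inordK hle) subnK ?inord_val //; by case: eqP => // ->.
Qed.



Lemma key (R : realType) q n (u : 'I_q -> R) (t : 'I_q -> nat) (c : 'I_q) :
  (\sum_(i < q) t i = n.+1)%N ->
  multinom n.+1 u t * (t c)%:R = n.+1%:R * u c * shiftQ (multinom n u) t c.
Proof.
move=> hs; rewrite /shiftQ; case: posnP => [->|tcpos]; first by rewrite !mulr0.
move: tcpos; case e: (t c) => [//|k] _.
set t' := fun i => (t i - (i == c))%N.
have oth : forall i, i != c -> t' i = t i.
  by move=> i /negbTE ic; rewrite /t' ic subn0.
have tc' : t' c = k by rewrite /t' e eqxx subn1.
have hs' : (\sum_(i < q) t' i = n)%N.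
  rewrite (bigD1 c) //= e in hs; rewrite (bigD1 c) //= tc' (eq_bigr _ oth); by move: hs; rewrite addSn => -[].
have hP : (\prod_(i < q) (t i)`! = (\prod_(i < q) (t' i)`!) * k.+1)%N.
  rewrite (bigD1 c) //= [in RHS](bigD1 c) //= tc' e factS.
  by rewrite (eq_bigr _ (fun i ic => congr1 factorial (oth i ic))); ring.
have hU : \prod_(i < q) u i ^+ t i = (\prod_(i < q) u i ^+ t' i) * u c.
  rewrite (bigD1 c) //= [in RHS](bigD1 c) //= tc' e exprS.
  by rewrite (eq_bigr _ (fun i ic => congr1 (fun m => u i ^+ m) (oth i ic))); ring.
rewrite /multinom hs eqxx hs' eqxx hP hU factS !natrM.
have h1 : ((\prod_(i < q) (t' i)`!)%N%:R : R) != 0.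
  by rewrite pnatr_eq0 -lt0n prodn_gt0 // => i; exact: fact_gt0.
have h2 : ((k.+1)%:R : R) != 0 by rewrite pnatr_eq0.
by field; rewrite h1 /= addrC natr1.
Qed.



Section S.
Context (R : realType) (q : nat).
Implicit Types (F G : ('I_q -> nat) -> R).

Lemma Sm_ext m F G : (forall t : 'I_q -> nat, (\sum_(i < q) t i = m)%N -> F t = G t) ->
  Sm m F = Sm m G.
Proof. by move=> h; apply: eq_bigr => t /eqP; apply: h. Qed.

Lemma Sm_scale m (a : R) F : Sm m (fun t => a * F t) = a * Sm m F.
Proof. by rewrite /Sm mulr_sumr. Qed.

Lemma Sm_add m F G : Sm m (fun t => F t + G t) = Sm m F + Sm m G.
Proof. by rewrite /Sm big_split. Qed.

Lemma Sm_sum m (f : 'I_q -> ('I_q -> nat) -> R) :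
  Sm m (fun t => \sum_(c < q) f c t) = \sum_(c < q) Sm m (f c).
Proof. by rewrite /Sm exchange_big. Qed.

Lemma Sm0 F : Sm 0 F = F (fun _ => 0%N).
Proof.
rewrite /Sm (big_pred1 [ffun=> ord0]).
  by congr F; apply: funext => i; rewrite ffunE.
move=> t /=; have ht : t = [ffun=> ord0].
  by apply/ffunP => i; rewrite ffunE; apply: val_inj; case: (t i) => [[]].
rewrite ht eqxx; apply/eqP; apply: big1 => i _; by rewrite ffunE.
Qed.

Lemma Sm_le m F G : (forall t : 'I_q -> nat, (\sum_(i < q) t i = m)%N -> F t <= G t) ->
  Sm m F <= Sm m G.
Proof. by move=> h; apply: ler_sum => t /eqP; apply: h. Qed.

Variable u : 'I_q -> R.

Definition Ex m (g : ('I_q -> nat) -> R) := Sm m (fun t => multinom m u t * g t).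

Lemma Ex_scale m a g : Ex m (fun t => a * g t) = a * Ex m g.
Proof. rewrite /Ex -Sm_scale; apply: Sm_ext => t _; ring. Qed.

Lemma Ex_add m f g : Ex m (fun t => f t + g t) = Ex m f + Ex m g.
Proof. rewrite /Ex -Sm_add; apply: Sm_ext => t _; ring. Qed.

Lemma Ex_shift m (c : 'I_q) g :
  Ex m.+1 (fun t => (t c)%:R * g t) =
  m.+1%:R * u c * Ex m (fun s => g (fun i => (s i + (i == c))%N)).
Proof.
transitivity (Sm m.+1 (fun t => m.+1%:R * u c *
   (if (0 < t c)%N then multinom m u (fun i => (t i - (i == c))%N) *
        g (fun i => ((t i - (i == c)) + (i == c))%N) else 0))).
  apply: Sm_ext => t hs; rewrite mulrA key // /shiftQ.
  case: ifP => h; last by rewrite !mulr0 mul0r.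
  rewrite -mulrA; congr (_ * (_ * _)); congr g; apply: funext => i.
  by case: eqP => [->|]; rewrite ?subn0 ?addn0 // subnK.
rewrite Sm_scale; congr (_ * _).
exact: (Sm_shift m c (fun s => multinom m u s * g (fun i => (s i + (i == c))%N))).
Qed.

Hypothesis u_sum : \sum_(i < q) u i = 1.

Lemma mass m : Ex m (fun _ => 1) = 1.
Proof.
elim: m => [|k IH].
  rewrite /Ex Sm0 /multinom /= big1_eq eqxx fact0 big1_eq (eq_bigr (fun=> 1) (fun i _ => expr0 (u i))) big1_eq.
  by rewrite divr1 !mulr1.
transitivity (Ex k.+1 (fun t => (k.+1%:R)^-1 * \sum_(c < q) (t c)%:R * 1)).
  apply: Sm_ext => t hs; congr (_ * _).
  under eq_bigr do rewrite mulr1.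
  by rewrite -natr_sum hs mulVf // pnatr_eq0.
rewrite Ex_scale /Ex.
under Sm_ext do rewrite mulr_sumr.
rewrite Sm_sum.
under eq_bigr do rewrite -/(Ex _ _) Ex_shift IH mulr1.
by rewrite -mulr_sumr u_sum mulr1 mulVf // pnatr_eq0.
Qed.

Lemma Ex_const m a : Ex m (fun _ => a) = a.
Proof.
have -> : (fun _ : 'I_q -> nat => a) = (fun _ => a * 1) by apply: funext => t; rewrite mulr1.
by rewrite Ex_scale mass mulr1.
Qed.

Lemma E1 m c : Ex m (fun t => (t c)%:R) = m%:R * u c.
Proof.
case: m => [|k].
  by rewrite /Ex Sm0 mulr0 mul0r.
have -> : (fun t : 'I_q -> nat => (t c)%:R : R) = (fun t => (t c)%:R * 1)
  by apply: funext => t; rewrite mulr1.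
rewrite Ex_shift mass; ring.
Qed.

Lemma E2 m c d : Ex m.+1 (fun t => (t c)%:R * (t d)%:R) =
  m.+1%:R * u c * (m%:R * u d + (d == c)%:R).
Proof.
rewrite Ex_shift; congr (_ * _).
under [X in Ex _ X = _]funext => s do rewrite natrD.
by rewrite Ex_add E1 Ex_const.
Qed.

End S.



Section S4.
Context (R : realType) (q : nat) (u : 'I_q -> R).
Hypothesis u_ge0 : forall i, 0 <= u i.
Hypothesis u_sum : \sum_(i < q) u i = 1.

Lemma multinom_ge0 m t : 0 <= multinom m u t.
Proof.
rewrite /multinom; case: ifP => _ //.
apply: mulr_ge0; first by apply: divr_ge0; apply: ler0n.
by apply: prodr_ge0 => i _; apply: exprn_ge0.
Qed.

Lemma Var n (a b : 'I_q) : a != b -> u a != 0 -> u b != 0 ->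
  Ex u n.+1 (fun t => ((t b)%:R / u b - (t a)%:R / u a) ^+ 2) =
  n.+1%:R * ((u a)^-1 + (u b)^-1).
Proof.
move=> hab ua ub.
transitivity (Ex u n.+1 (fun t => (u b ^+ 2)^-1 * ((t b)%:R * (t b)%:R) +
   ((- 2 / (u a * u b)) * ((t a)%:R * (t b)%:R) +
    (u a ^+ 2)^-1 * ((t a)%:R * (t a)%:R)))).
  by apply: Sm_ext => t _; congr (_ * _); field; rewrite ua ub.
have hba : (b == a) = false by rewrite eq_sym (negbTE hab).
rewrite !Ex_add !Ex_scale !E2 // !eqxx hba /=.
by field; rewrite ua ub.
Qed.

Lemma absX_le (x s : R) : 0 < s -> `|x| <= (x ^+ 2 + s ^+ 2) / (2 * s).
Proof.
move=> sp; rewrite ler_pdivlMr ?mulr_gt0 //.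
have h := sqr_ge0 (`|x| - s).
rewrite -(real_normK (num_real x)).
by move: h; rewrite sqrrB; lra.
Qed.

Lemma Dab_bound n (a b : 'I_q) : a != b -> 0 < u a -> 0 < u b ->
  Dab n (multinom n u) a b <=
  ((u a)^-1 + (u b)^-1 + 1) / 2 / Num.sqrt n.+1%:R.
Proof.
move=> hab ua ub.
have ua0 : u a != 0 by rewrite gt_eqF.
have ub0 : u b != 0 by rewrite gt_eqF.
set m : R := n.+1%:R.
have mp : 0 < m by rewrite ltr0n.
set s := Num.sqrt m.
have sp : 0 < s by rewrite sqrtr_gt0.
have s2 : s ^+ 2 = m by rewrite sqr_sqrtr // ltW.
set X := fun t : 'I_q -> nat => (t b)%:R / u b - (t a)%:R / u a.
have -> : Dab n (multinom n u) a b =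
  Sm n.+1 (fun t => `|shiftQ (multinom n u) t b - shiftQ (multinom n u) t a|) by [].
have hsh : forall t c, (\sum_(i < q) t i)%N = n.+1 -> u c != 0 ->
    shiftQ (multinom n u) t c = m^-1 * (multinom n.+1 u t * ((t c)%:R / u c)).
  move=> t c hs uc.
  have := key u c hs; rewrite -/m => h.
  apply: (mulfI (_ : m * u c != 0)); first by rewrite mulf_neq0 // gt_eqF.
  by rewrite -h; field; rewrite uc gt_eqF.
apply: le_trans (_ : Sm n.+1 (fun t => m^-1 * (multinom n.+1 u t *
     ((X t ^+ 2 + s ^+ 2) / (2 * s)))) <= _).
  apply: Sm_le => t hs.
  rewrite !hsh // -mulrBr -mulrBr normrM normrM (ger0_norm (_ : 0 <= m^-1)); last by rewrite invr_ge0 ltW.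
  rewrite (ger0_norm (multinom_ge0 _ _)).
  apply: ler_wpM2l; first by rewrite invr_ge0 ltW.
  apply: ler_wpM2l; first exact: multinom_ge0.
  exact: absX_le.
rewrite Sm_scale.
have -> : Sm n.+1 (fun t => multinom n.+1 u t * ((X t ^+ 2 + s ^+ 2) / (2 * s))) =
   Ex u n.+1 (fun t => (2 * s)^-1 * (X t ^+ 2) + (2 * s)^-1 * (s ^+ 2)).
  by apply: Sm_ext => t _; congr (_ * _); rewrite mulrDl !(mulrC (_^-1)).
rewrite Ex_add !Ex_scale Ex_const.
rewrite (_ : Ex u n.+1 (fun t => X t ^+ 2) = m * ((u a)^-1 + (u b)^-1)); last exact: Var.
rewrite (_ : s * s = m); last by rewrite -expr2.
have sne : s != 0 by rewrite gt_eqF.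
have mne : m != 0 by rewrite gt_eqF.
rewrite le_eqVlt; apply/orP; left; apply/eqP.
  by field; rewrite sne ua0 ub0 /= addrC natr1.
exact: u_sum.
Qed.

End S4.



Section S5.
Context (R : realType) (q : nat) (u : 'I_q -> R).
Hypothesis u_ge0 : forall i, 0 <= u i.
Hypothesis u_sum : \sum_(i < q) u i = 1.

Lemma vanish n (c d : 'I_q) (t : 'I_q -> nat) : u c = 0 -> d != c -> (0 < t c)%N ->
  shiftQ (multinom n u) t d = 0.
Proof.
move=> uc dc tc; rewrite /shiftQ; case: ifP => // _; rewrite /multinom; case: ifP => // _.
rewrite [X in _ * X](bigD1 c) //= [c == d]eq_sym (negbTE dc) subn0 uc expr0n.
by case: (t c) tc => // k _; rewrite mul0r mulr0.
Qed.

Lemma shiftQ_ge0 n t c : 0 <= shiftQ (multinom n u) t c.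
Proof. by rewrite /shiftQ; case: ifP => // _; exact: multinom_ge0. Qed.

Lemma Dab_zero n (a b : 'I_q) : a != b -> (u a = 0 \/ u b = 0) ->
  Dab n (multinom n u) a b = 2.
Proof.
move=> hab hz.
have -> : Dab n (multinom n u) a b =
  Sm n.+1 (fun t => `|shiftQ (multinom n u) t b - shiftQ (multinom n u) t a|) by [].
transitivity (Sm n.+1 (fun t => shiftQ (multinom n u) t b + shiftQ (multinom n u) t a)).
  apply: Sm_ext => t _.
  have [->|->] : shiftQ (multinom n u) t a = 0 \/ shiftQ (multinom n u) t b = 0.
      case ha: (0 < t a)%N; last by left; rewrite /shiftQ ha.
      case hb: (0 < t b)%N; last by right; rewrite /shiftQ hb.
      case: hz => hz; [right; apply: (vanish _ hz) | left; apply: (vanish _ hz)] => //.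
      by rewrite eq_sym.
    by rewrite subr0 addr0 ger0_norm // shiftQ_ge0.
  by rewrite sub0r add0r normrN ger0_norm // shiftQ_ge0.
rewrite Sm_add /shiftQ.
rewrite (Sm_shift n b (multinom n u)) (Sm_shift n a (multinom n u)).
have h1 : Sm n (multinom n u) = 1.
  rewrite -(mass u_sum n); apply: Sm_ext => t _; by rewrite mulr1.
by rewrite h1.
Qed.

End S5.

Lemma log2_ge1 (R : realType) (n : nat) : (2 <= n)%N -> 1 <= log2 (n%:R : R).
Proof.
move=> hn; rewrite /log2.
have l2 : 0 < ln (2 : R) by apply: ln_gt0; lra.
rewrite ler_pdivlMr // mul1r ler_ln ?posrE ?ltr0n //; last by lia.
by rewrite ler_nat.
Qed.

Lemma final_bound (R : realType) (n : nat) (C e : R) : (2 <= n)%N -> 0 <= C -> 0 <= e ->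
  C / Num.sqrt (n.+1%:R) <= C * (log2 (n%:R : R)) `^ e / Num.sqrt (n%:R).
Proof.
move=> hn C0 e0.
have sp : 0 < Num.sqrt (n%:R : R) by rewrite sqrtr_gt0 ltr0n; lia.
have sp1 : 0 < Num.sqrt (n.+1%:R : R) by rewrite sqrtr_gt0 ltr0n.
have hL : 1 <= (log2 (n%:R : R)) `^ e.
  have h1 : (1 : R) = 1 `^ e by rewrite powR1.
  rewrite [X in X <= _]h1.
  apply: ge0_ler_powR => //; rewrite ?nnegrE //; last exact: log2_ge1.
  by apply: le_trans (log2_ge1 _ hn).
rewrite -mulrA; apply: ler_wpM2l => //.
apply: le_trans (_ : (Num.sqrt n%:R)^-1 <= _).
  rewrite lef_pV2 ?posrE // ler_sqrt ?ler_nat //; lia.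
by rewrite -[X in X <= _]mul1r; apply: ler_wpM2r => //; rewrite invr_ge0 ltW.
Qed.



Unset Implicit Arguments.
Set Strict Implicit.

Theorem lemma3 (R : realType) (q : nat) (hq : (2 <= q)%N) (u : 'I_q -> R)
  (u_ge0 : forall i, 0 <= u i) (u_sum : \sum_(i < q) u i = 1)
  (a b : 'I_q) (hab : a != b) :
  exists C1 : R, exists N : nat, forall n : nat, (N <= n)%N ->
    [/\ (u a = 0 \/ u b = 0) -> Dab n (multinom n u) a b = 2,
        (0 < u a /\ 0 < u b) ->
          Dab n (multinom n u) a b <=
            C1 * (log2 n%:R) `^ (((supp_size u)%:R - 2) / 2) / Num.sqrt (n%:R)
      & (forall i, 0 < u i) ->
          Dab n (multinom n u) a b <=
            C1 * (log2 n%:R) `^ ((q%:R - 2) / 2) / Num.sqrt (n%:R)].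
Proof.
exists (((u a)^-1 + (u b)^-1 + 1) / 2), 2%N => n hn.
have C0 : 0 <= ((u a)^-1 + (u b)^-1 + 1) / 2.
  by apply: divr_ge0 => //; rewrite !addr_ge0 // invr_ge0.
split.
- by move=> hz; exact: Dab_zero.
- move=> [ua ub]; apply: le_trans (Dab_bound u_ge0 u_sum n hab ua ub) _.
  apply: final_bound => //; apply: divr_ge0 => //; rewrite subr_ge0.
  rewrite ler_nat /supp_size.
  have -> : 2%N = #|[set a; b]| by rewrite cards2 hab.
  have sub : [set a; b] \subset [pred i | 0 < u i].
    by apply/fintype.subsetP => i; rewrite !inE; case/orP => /eqP ->.
  exact: subset_leq_card sub.
- move=> hpos; apply: le_trans (Dab_bound u_ge0 u_sum n hab (hpos a) (hpos b)) _.
  apply: final_bound => //; apply: divr_ge0 => //; rewrite subr_ge0.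
  by rewrite ler_nat.
Qed.
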